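(* Let $G$ be any GP 2 host graph in which every node is marked grey and is not a root, and every edge is unmarked (labels arbitrary; parallel edges and loops allowed). Then the execution of the GP 2 program is-dag on $G$ terminates, and: if $G$ is acyclic, it does not fail and returns a host graph isomorphic to $G$ up to marks; if $G$ contains a directed cycle, it fails. (That is, is-dag is totally correct with respect to this specification.)
   Context: A graph is acyclic if it contains no directed cycle; a loop (edge from a node to itself) counts as a directed cycle. ''Isomorphic up to marks'' means isomorphic when marks and root status are ignored. GP 2 semantics. Host graphs are finite directed graphs whose nodes and edges carry labels (lists of integers and strings) and marks (nodes: unmarked, red, green, blue, grey; edges: unmarked, red, green, blue, dashed); some nodes are roots. A rule is applied by finding an injective match of its left-hand side compatible with labels and marks (mark ''any'' matches every mark; roots match roots), satisfying the dangling condition, then changing matched items as prescribed by the right-hand side. Commands: a rule set call $\{r_1,\dots,r_k\}$ applies one applicable rule, failing if none applies; $P;Q$ sequencing; $P!$ iterates $P$ until it fails, returning the graph on which $P$ was last entered (a break inside the body terminates the innermost loop with the current graph); ''try $C$ then $P$ else $Q$'' runs $C$ and continues with $P$ on its result if it succeeded, else runs $Q$ on the original graph (missing branches do nothing); ''if $C$ then $P$ else $Q$'' runs $C$ on a copy then $P$ or $Q$ on the original; fail causes failure. The program is-dag (variables of type list; all rules keep labels; rule edges are directed from node 1 to node 2): Main = (init; DFS!; try unroot else break)!; Check DFS = try next_edge then (try {move, ignore} else (set_flag; break)) else (try loop; try back else break) Check = if flag then fail - init: a grey non-root node becomes a red root. - unroot: a red root becomes a blue non-root node. - set_flag: a red root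 becomes a green root. - flag: a green root; no change (test). - next_edge: a red root 1, a node 2 of any mark, an unmarked edge from 1 to 2; the edge becomes red. - ignore: red root 1, blue node 2, red edge from 1 to 2; the edge becomes blue. - move: red root 1, grey node 2, red edge from 1 to 2; node 1 becomes a red non-root, node 2 becomes a red root, the edge becomes dashed. - back: red non-root 1, red root 2, dashed edge from 1 to 2; node 1 becomes a red root, node 2 becomes a blue non-root, the edge becomes blue. - loop: a red root with an unmarked loop; the node becomes a green root, the loop is unchanged. *)

(* Defs.v *)
From mathcomp Require Import all_boot ssrint.
From Stdlib Require String.
Set Implicit Arguments.
Unset Strict Implicit.
Unset Printing Implicit Defensive.

Inductive atom := AInt of int | AStr of String.string.
Definition label := seq atom.

Inductive nmark := NUnmarked | NRed | NGreen | NBlue | NGrey.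
Inductive emark := EUnmarked | ERed | EGreen | EBlue | EDashed.

Record hgraph := HGraph {
  hV : finType;
  hE : finType;
  hsrc : hE -> hV;
  htgt : hE -> hV;
  hlabV : hV -> label;
  hlabE : hE -> label;
  hmarkV : hV -> nmark;
  hmarkE : hE -> emark;
  hroot : hV -> bool }.

Definition remark (G : hgraph) (mv : hV G -> nmark) (me : hE G -> emark)
  (rt : hV G -> bool) : hgraph :=
  @HGraph (hV G) (hE G) (@hsrc G) (@htgt G) (@hlabV G) (@hlabE G) mv me rt.

Definition upd (T : eqType) (U : Type) (f : T -> U) (x : T) (y : U) : T -> U :=
  fun z => if z == x then y else f z.

(* Matching conventions (GP 2): matches are injective (so distinct rule nodes
   go to distinct host nodes); a root rule node only matches a root host node,
   while a non-root rule node matches root and non-root host nodes alike; a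
   rule node that is root on the left and non-root on the right loses its
   root status, one that is non-root on the left and root on the right gains
   it, otherwise root status is unchanged.  Rule edges are directed from node
   1 to node 2.  No rule deletes anything, so the dangling condition is
   vacuous. *)

Inductive rule := r_init | r_unroot | r_set_flag | r_flag | r_next_edge
                | r_ignore | r_move | r_back | r_loop.

Definition rule_app (r : rule) (G H : hgraph) : Prop :=
  let mV := @hmarkV G in let mE := @hmarkE G in let rt := @hroot G in
  match r with
  | r_init => exists v : hV G, mV v = NGrey /\
      H = remark (upd mV v NRed) mE (upd rt v true)
  | r_unroot => exists v : hV G, rt v /\ mV v = NRed /\
      H = remark (upd mV v NBlue) mE (upd rt v false)
  | r_set_flag => exists v : hV G, rt v /\ mV v = NRed /\
      H = remark (upd mV v NGreen) mE rt
  | r_flag => exists v : hV G, rt v /\ mV v = NGreen /\ H = G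
  | r_next_edge => exists (v1 v2 : hV G) (e : hE G),
      v1 != v2 /\ rt v1 /\ mV v1 = NRed /\
      hsrc e = v1 /\ htgt e = v2 /\ mE e = EUnmarked /\
      H = remark mV (upd mE e ERed) rt
  | r_ignore => exists (v1 v2 : hV G) (e : hE G),
      v1 != v2 /\ rt v1 /\ mV v1 = NRed /\ mV v2 = NBlue /\
      hsrc e = v1 /\ htgt e = v2 /\ mE e = ERed /\
      H = remark mV (upd mE e EBlue) rt
  | r_move => exists (v1 v2 : hV G) (e : hE G),
      v1 != v2 /\ rt v1 /\ mV v1 = NRed /\ mV v2 = NGrey /\
      hsrc e = v1 /\ htgt e = v2 /\ mE e = ERed /\
      H = remark (upd (upd mV v1 NRed) v2 NRed) (upd mE e EDashed)
                 (upd (upd rt v1 false) v2 true)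
  | r_back => exists (v1 v2 : hV G) (e : hE G),
      v1 != v2 /\ mV v1 = NRed /\ rt v2 /\ mV v2 = NRed /\
      hsrc e = v1 /\ htgt e = v2 /\ mE e = EDashed /\
      H = remark (upd mV v2 NBlue) (upd mE e EBlue)
                 (upd (upd rt v1 true) v2 false)
  | r_loop => exists (v : hV G) (e : hE G),
      rt v /\ mV v = NRed /\ hsrc e = v /\ htgt e = v /\ mE e = EUnmarked /\
      H = remark (upd mV v NGreen) mE rt
  end.

Inductive cmd :=
  | RuleSet of seq rule          (* {r1,...,rk}; a single rule call is {r} *)
  | CSeq of cmd & cmd
  | CLoop of cmd
  | CTry of cmd & cmd & cmd
  | CIf of cmd & cmd & cmd
  | Skip
  | Break
  | CFail.

Inductive outcome := Res of hgraph | Failed | Brk of hgraph.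

(* Terminating executions: exec P G o means that some run of P on G
   terminates with outcome o (a result graph, failure, or a pending break). *)
Inductive exec : cmd -> hgraph -> outcome -> Prop :=
  | ex_rule rs r G H : List.In r rs -> rule_app r G H -> exec (RuleSet rs) G (Res H)
  | ex_rule_fail rs G : (forall r, List.In r rs -> forall H, ~ rule_app r G H) ->
      exec (RuleSet rs) G Failed
  | ex_seq P Q G H o : exec P G (Res H) -> exec Q H o -> exec (CSeq P Q) G o
  | ex_seq_fail P Q G : exec P G Failed -> exec (CSeq P Q) G Failed
  | ex_seq_brk P Q G H : exec P G (Brk H) -> exec (CSeq P Q) G (Brk H)
  | ex_loop P G H o : exec P G (Res H) -> exec (CLoop P) H o -> exec (CLoop P) G o
  | ex_loop_fail P G : exec P G Failed -> exec (CLoop P) G (Res G)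
  | ex_loop_brk P G H : exec P G (Brk H) -> exec (CLoop P) G (Res H)
  | ex_try_ok C P Q G H o : exec C G (Res H) -> exec P H o -> exec (CTry C P Q) G o
  | ex_try_fail C P Q G o : exec C G Failed -> exec Q G o -> exec (CTry C P Q) G o
  | ex_try_brk C P Q G H : exec C G (Brk H) -> exec (CTry C P Q) G (Brk H)
  | ex_if_ok C P Q G H o : exec C G (Res H) -> exec P G o -> exec (CIf C P Q) G o
  | ex_if_fail C P Q G o : exec C G Failed -> exec Q G o -> exec (CIf C P Q) G o
  | ex_if_brk C P Q G H : exec C G (Brk H) -> exec (CIf C P Q) G (Brk H)
  | ex_skip G : exec Skip G (Res G)
  | ex_break G : exec Break G (Brk G)
  | ex_fail G : exec CFail G Failed.

CoInductive diverges : cmd -> hgraph -> Prop :=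
  | dv_seq1 P Q G : diverges P G -> diverges (CSeq P Q) G
  | dv_seq2 P Q G H : exec P G (Res H) -> diverges Q H -> diverges (CSeq P Q) G
  | dv_loop1 P G : diverges P G -> diverges (CLoop P) G
  | dv_loop2 P G H : exec P G (Res H) -> diverges (CLoop P) H -> diverges (CLoop P) G
  | dv_try1 C P Q G : diverges C G -> diverges (CTry C P Q) G
  | dv_try2 C P Q G H : exec C G (Res H) -> diverges P H -> diverges (CTry C P Q) G
  | dv_try3 C P Q G : exec C G Failed -> diverges Q G -> diverges (CTry C P Q) G
  | dv_if1 C P Q G : diverges C G -> diverges (CIf C P Q) G
  | dv_if2 C P Q G H : exec C G (Res H) -> diverges P G -> diverges (CIf C P Q) G
  | dv_if3 C P Q G : exec C G Failed -> diverges Q G -> diverges (CIf C P Q) G.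

Definition R1 (r : rule) : cmd := RuleSet [:: r].

Definition DFS : cmd :=
  CTry (R1 r_next_edge)
       (CTry (RuleSet [:: r_move; r_ignore]) Skip (CSeq (R1 r_set_flag) Break))
       (CSeq (CTry (R1 r_loop) Skip Skip) (CTry (R1 r_back) Skip Break)).

Definition Check : cmd := CIf (R1 r_flag) CFail Skip.

Definition is_dag : cmd :=
  CSeq (CLoop (CSeq (R1 r_init) (CSeq (CLoop DFS) (CTry (R1 r_unroot) Skip Break))))
       Check.

(* G contains a directed cycle: a nonempty closed directed walk
   e0, e1, ..., ek (a loop is a cycle of length 1). *)
Definition has_dir_cycle (G : hgraph) : Prop :=
  exists (e0 : hE G) (es : seq (hE G)),
    path (fun e f => htgt e == hsrc f) e0 es && (htgt (last e0 es) == hsrc e0).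

Definition acyclic (G : hgraph) : Prop := ~ has_dir_cycle G.

Definition iso_upto_marks (G H : hgraph) : Prop :=
  exists (fV : hV G -> hV H) (fE : hE G -> hE H),
    bijective fV /\ bijective fE /\
    (forall e, hsrc (fE e) = fV (hsrc e)) /\
    (forall e, htgt (fE e) = fV (htgt e)) /\
    (forall v, hlabV (fV v) = hlabV v) /\
    (forall e, hlabE (fE e) = hlabE e).

Definition initial_graph (G : hgraph) : Prop :=
  (forall v : hV G, hmarkV v = NGrey /\ hroot v = false) /\
  (forall e : hE G, hmarkE e = EUnmarked).

(* Main.v *)
Require Import Defs.
From mathcomp Require Import all_boot zify.
From Stdlib Require Import Classical.
Set Implicit Arguments.
Unset Strict Implicit.
Unset Printing Implicit Defensive.

Lemma updE (T : eqType) U (f : T -> U) a y b : upd f a y b = if b == a then y else f b.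
Proof. by []. Qed.

Lemma sum_upd (T : finType) (U : Type) (w : U -> nat) (f : T -> U) a b :
  \sum_(x : T) w (upd f a b x) + w (f a) = \sum_(x : T) w (f x) + w b.
Proof.
rewrite (bigD1 a) //= [X in _ = X + _](bigD1 a) //= {1}/upd eqxx.
rewrite (eq_bigr (fun x => w (f x))); first lia.
by move=> x /negbTE; rewrite /upd => ->.
Qed.

Lemma total P : forall X, (exists o, exec P X o) \/ diverges P X.
Proof.
induction P as [rs|P IHP Q IHQ|P IHP|C IHC P IHP Q IHQ|C IHC P IHP Q IHQ| | |]; intro X.
- destruct (classic (exists r Y, List.In r rs /\ rule_app r X Y)) as [[r [Y [h1 h2]]]|hn].
  + left; exists (Res Y); eapply ex_rule; eauto.
  + left; exists Failed; apply ex_rule_fail; intros r hr Y hy; apply hn; eauto.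
- destruct (IHP X) as [[o ho]|hd].
  + destruct o as [Y| |Y].
    * destruct (IHQ Y) as [[o' ho']|hd'].
      -- left; exists o'; eapply ex_seq; eauto.
      -- right; eapply dv_seq2; eauto.
    * left; exists Failed; apply ex_seq_fail; auto.
    * left; exists (Brk Y); apply ex_seq_brk; auto.
  + right; apply dv_seq1; auto.
- destruct (classic (exists o, exec (CLoop P) X o)) as [h|hn]; [left; exact h|right].
  revert X hn; cofix CIH; intros X hn.
  destruct (IHP X) as [[o ho]|hd].
  + destruct o as [Y| |Y].
    * apply dv_loop2 with Y; [exact ho|].
      apply CIH; intros [o' h']; apply hn; exists o'; eapply ex_loop; eauto.
    * exfalso; apply hn; exists (Res X); apply ex_loop_fail; auto.
    * exfalso; apply hn; exists (Res Y); apply ex_loop_brk; auto.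
  + apply dv_loop1; auto.
- destruct (IHC X) as [[o ho]|hd].
  + destruct o as [Y| |Y].
    * destruct (IHP Y) as [[o' ho']|hd'].
      -- left; exists o'; eapply ex_try_ok; eauto.
      -- right; eapply dv_try2; eauto.
    * destruct (IHQ X) as [[o' ho']|hd'].
      -- left; exists o'; eapply ex_try_fail; eauto.
      -- right; eapply dv_try3; eauto.
    * left; exists (Brk Y); apply ex_try_brk; auto.
  + right; apply dv_try1; auto.
- destruct (IHC X) as [[o ho]|hd].
  + destruct o as [Y| |Y].
    * destruct (IHP X) as [[o' ho']|hd'].
      -- left; exists o'; eapply ex_if_ok; eauto.
      -- right; eapply dv_if2; eauto.
    * destruct (IHQ X) as [[o' ho']|hd'].
      -- left; exists o'; eapply ex_if_fail; eauto.
      -- right; eapply dv_if3; eauto.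
    * left; exists (Brk Y); apply ex_if_brk; auto.
  + right; apply dv_if1; auto.
- left; exists (Res X); constructor.
- left; exists (Brk X); constructor.
- left; exists Failed; constructor.
Qed.

Lemma inv_R1 r X o : exec (R1 r) X o ->
  (exists Y, o = Res Y /\ rule_app r X Y) \/ (o = Failed /\ forall Y, ~ rule_app r X Y).
Proof.
intro h; inversion h; subst.
- left; eexists; split; [reflexivity|].
  match goal with h : List.In _ _ |- _ => destruct h as [<-|[]] end; assumption.
- right; split; [reflexivity|]. intros Y.
  match goal with h : forall r, List.In r _ -> _ |- _ => apply h; left; reflexivity end.
Qed.

Lemma inv_RS2 r1 r2 X o : exec (RuleSet [:: r1; r2]) X o ->
  (exists Y, o = Res Y /\ (rule_app r1 X Y \/ rule_app r2 X Y)) \/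
  (o = Failed /\ (forall Y, ~ rule_app r1 X Y) /\ forall Y, ~ rule_app r2 X Y).
Proof.
intro h; inversion h; subst.
- left; eexists; split; [reflexivity|].
  match goal with h : List.In _ _ |- _ => destruct h as [<-|[<-|[]]] end; auto.
- right; split; [reflexivity|].
  match goal with h : forall r, List.In r _ -> _ |- _ => split; intros Y; apply h; simpl; auto end.
Qed.

Lemma inv_seq P Q X o : exec (CSeq P Q) X o ->
  (exists Y, exec P X (Res Y) /\ exec Q Y o) \/ (exec P X Failed /\ o = Failed) \/
  (exists Y, exec P X (Brk Y) /\ o = Brk Y).
Proof. intro h; inversion h; subst; eauto 6. Qed.

Lemma inv_try C P Q X o : exec (CTry C P Q) X o ->
  (exists Y, exec C X (Res Y) /\ exec P Y o) \/ (exec C X Failed /\ exec Q X o) \/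
  (exists Y, exec C X (Brk Y) /\ o = Brk Y).
Proof. intro h; inversion h; subst; eauto 6. Qed.

Lemma inv_if C P Q X o : exec (CIf C P Q) X o ->
  (exists Y, exec C X (Res Y) /\ exec P X o) \/ (exec C X Failed /\ exec Q X o) \/
  (exists Y, exec C X (Brk Y) /\ o = Brk Y).
Proof. intro h; inversion h; subst; eauto 6. Qed.

Lemma inv_skip X o : exec Skip X o -> o = Res X.
Proof. intro h; inversion h; auto. Qed.
Lemma inv_break X o : exec Break X o -> o = Brk X.
Proof. intro h; inversion h; auto. Qed.
Lemma inv_cfail X o : exec CFail X o -> o = Failed.
Proof. intro h; inversion h; auto. Qed.
Lemma rs_nobrk rs X Y : ~ exec (RuleSet rs) X (Brk Y).
Proof. intro h; inversion h. Qed.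

Lemma tsb_nofail C X : ~ exec (CTry C Skip Break) X Failed.
Proof.
move=> h; case/inv_try: h => [[Y [_ /inv_skip]]|[[_ /inv_break]|[Y [_ ]]]] //.
Qed.

Definition wV m := match m with NGrey => 2 | NRed => 1 | _ => 0 end.
Definition wE m := match m with EUnmarked => 3 | ERed => 2 | EDashed => 1 | _ => 0 end.
Definition M (X : hgraph) :=
  \sum_(v : hV X) wV (hmarkV v) + \sum_(e : hE X) wE (hmarkE e).

Lemma rule_M r X Y : rule_app r X Y -> M Y <= M X /\ (r <> r_flag -> M Y < M X).
Proof.
case: r => /=.
- case=> v [hv ->]; rewrite /M /=.
  have := sum_upd wV (@hmarkV X) v NRed; rewrite hv /=; lia.
- case=> v [_ [hv ->]]; rewrite /M /=.
  have := sum_upd wV (@hmarkV X) v NBlue; rewrite hv /=; lia.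
- case=> v [_ [hv ->]]; rewrite /M /=.
  have := sum_upd wV (@hmarkV X) v NGreen; rewrite hv /=; lia.
- case=> v [_ [_ ->]]; split => //; lia.
- case=> v1 [v2 [e [_ [_ [_ [_ [_ [he ->]]]]]]]]; rewrite /M /=.
  have := sum_upd wE (@hmarkE X) e ERed; rewrite he /=; lia.
- case=> v1 [v2 [e [_ [_ [_ [_ [_ [_ [he ->]]]]]]]]]; rewrite /M /=.
  have := sum_upd wE (@hmarkE X) e EBlue; rewrite he /=; lia.
- case=> v1 [v2 [e [hne [_ [h1 [h2 [_ [_ [he ->]]]]]]]]]; rewrite /M /=.
  have := sum_upd wE (@hmarkE X) e EDashed; rewrite he /=.
  have := sum_upd wV (@hmarkV X) v1 NRed; rewrite h1 /=.
  have := sum_upd wV (upd (@hmarkV X) v1 NRed) v2 NRed.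
  rewrite updE eq_sym (negbTE hne) h2 /=; lia.
- case=> v1 [v2 [e [hne [h1 [_ [h2 [_ [_ [he ->]]]]]]]]]; rewrite /M /=.
  have := sum_upd wE (@hmarkE X) e EBlue; rewrite he /=.
  have := sum_upd wV (@hmarkV X) v2 NBlue; rewrite h2 /=; lia.
- case=> v [e [_ [hv [_ [_ [_ ->]]]]]]; rewrite /M /=.
  have := sum_upd wV (@hmarkV X) v NGreen; rewrite hv /=; lia.
Qed.

Lemma exec_M P X o : exec P X o ->
  match o with Res Y | Brk Y => is_true (M Y <= M X) | Failed => True end.
Proof.
elim => //=; try (move=> *; lia).
- by move=> rs r G0 H _ /rule_M [].
- move=> P0 Q G0 H [Y| |Y] _ h1 _ h2 //=; lia.
- move=> P0 G0 H [Y| |Y] _ h1 _ h2 //=; lia.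
- move=> C P0 Q G0 H [Y| |Y] _ h1 _ h2 //=; lia.
Qed.

Definition nodiv P := forall X, ~ diverges P X.

Lemma nodiv_rs rs : nodiv (RuleSet rs).
Proof. by move=> X h; inversion h. Qed.
Lemma nodiv_skip : nodiv Skip. Proof. by move=> X h; inversion h. Qed.
Lemma nodiv_break : nodiv Break. Proof. by move=> X h; inversion h. Qed.
Lemma nodiv_fail : nodiv CFail. Proof. by move=> X h; inversion h. Qed.
Lemma nodiv_seq P Q : nodiv P -> nodiv Q -> nodiv (CSeq P Q).
Proof. move=> hP hQ X h; inversion h; subst;
  match goal with h' : diverges P _ |- _ => exact: hP h' | h' : diverges Q _ |- _ => exact: hQ h' end.
Qed.
Lemma nodiv_try C P Q : nodiv C -> nodiv P -> nodiv Q -> nodiv (CTry C P Q).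
Proof. move=> hC hP hQ X h; inversion h; subst;
  match goal with h' : diverges C _ |- _ => exact: hC h' | h' : diverges P _ |- _ => exact: hP h'
   | h' : diverges Q _ |- _ => exact: hQ h' end.
Qed.
Lemma nodiv_if C P Q : nodiv C -> nodiv P -> nodiv Q -> nodiv (CIf C P Q).
Proof. move=> hC hP hQ X h; inversion h; subst;
  match goal with h' : diverges C _ |- _ => exact: hC h' | h' : diverges P _ |- _ => exact: hP h'
   | h' : diverges Q _ |- _ => exact: hQ h' end.
Qed.
Lemma nodiv_loop P : nodiv P -> (forall X Y, exec P X (Res Y) -> M Y < M X) -> nodiv (CLoop P).
Proof.
move=> hP hd X; move: {2}(M X) (leqnn (M X)) => n; elim: n X => [|n IH] X hX h;
  inversion h; subst.
- match goal with h' : diverges P _ |- _ => exact: hP h' end.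
- match goal with h' : exec P _ _ |- _ => have := hd _ _ h'; lia end.
- match goal with h' : diverges P _ |- _ => exact: hP h' end.
- match goal with h' : exec P _ (Res ?Y) , h2 : diverges _ ?Y |- _ =>
    apply: (IH Y) h2; have := hd _ _ h'; lia end.
Qed.

Lemma term X : ~ diverges is_dag X.
Proof.
have hD : nodiv DFS.
  apply: nodiv_try; first exact: nodiv_rs.
  - apply: nodiv_try; [exact: nodiv_rs|exact: nodiv_skip|].
    apply: nodiv_seq; [exact: nodiv_rs|exact: nodiv_break].
  - apply: nodiv_seq; (apply: nodiv_try; [exact: nodiv_rs|exact: nodiv_skip|]).
    exact: nodiv_skip. exact: nodiv_break.
have hDs : forall X Y, exec DFS X (Res Y) -> M Y < M X.
  move=> X0 Y /inv_try [[Z [/inv_R1 [[Z' [[?] hr]]|[]//] h2]]|[[_ h2]|[Z [_ //]]]].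
  - subst; have := exec_M h2; have := rule_M hr; case=> _ /(_ ltac:(done)) /=; lia.
  - case/inv_seq: h2 => [[Z [h1 h2]]|[[_ //]|[Z [_ //]]]].
    case/inv_try: h2 => [[W [/inv_R1 [[W' [[?] hr]]|[]//] /inv_skip [?]]]|[[_ /inv_break //]|[W [_ //]]]].
    subst; have := exec_M h1; have := rule_M hr; case=> _ /(_ ltac:(done)) /=; lia.
have hL : nodiv (CLoop DFS) by apply: nodiv_loop.
apply: nodiv_seq; last by apply: nodiv_if; [exact: nodiv_rs|exact: nodiv_fail|exact: nodiv_skip].
apply: nodiv_loop.
  apply: nodiv_seq; first exact: nodiv_rs.
  apply: nodiv_seq => //; apply: nodiv_try; [exact: nodiv_rs|exact: nodiv_skip|exact: nodiv_break].
move=> X0 Y /inv_seq [[Z [/inv_R1 [[Z' [[?] hr]]|[]//] h2]]|[[_ //]|[Z [_ //]]]].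
subst; have := exec_M h2; have := rule_M hr; case=> _ /(_ ltac:(done)) /=; lia.
Qed.


Lemma remark_eta (X : hgraph) : X = @remark X (@hmarkV X) (@hmarkE X) (@hroot X).
Proof. by case: X. Qed.

Lemma loop_inv body (I Q : hgraph -> Prop) :
  (forall X o, exec body X o -> I X ->
     match o with Res Y => I Y | Brk Y => Q Y | Failed => Q X end) ->
  forall X o, exec (CLoop body) X o -> I X -> exists Y, o = Res Y /\ Q Y.
Proof.
move=> hb X o h; remember (CLoop body) as c eqn:Ec; revert Ec.
induction h; intros Ec hI; try discriminate; case: Ec => ?; subst.
- apply: IHh2 => //; exact: (hb _ _ h1 hI).
- eexists; split; first reflexivity; exact: (hb _ _ h hI).
- eexists; split; first reflexivity; exact: (hb _ _ h hI).
Qed.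

Section Inv.
Variable G : hgraph.
Notation V := (hV G).
Notation E := (hE G).

Fixpoint chain (s : seq E) (r : V) : Prop :=
  if s is e :: s' then htgt e = head r (map (@hsrc G) s') /\ chain s' r else True.

Lemma head_map_rcons (s : seq E) e r :
  head r (map (@hsrc G) (rcons s e)) = head (hsrc e) (map (@hsrc G) s).
Proof. by case: s. Qed.

Lemma chain_rcons s r e : chain s r -> hsrc e = r -> chain (rcons s e) (htgt e).
Proof.
elim: s => [|a s IH] /=; first by [].
by case=> h1 h2 he; split; [rewrite head_map_rcons he | exact: IH].
Qed.

Lemma chain_rcons_inv s r e : chain (rcons s e) r -> chain s (hsrc e) /\ htgt e = r.
Proof.
elim: s => [|a s IH] /=; first by case.
by rewrite head_map_rcons; case=> h1 /IH [h2 h3].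
Qed.

Lemma chain_last s r e : chain s r -> r \notin map (@hsrc G) s -> e \in s -> htgt e = r ->
  exists s', s = rcons s' e.
Proof.
elim: s => [|a s IH] //= [h1 h2]; rewrite in_cons negb_or => /andP [nra nrs].
rewrite in_cons => /orP [/eqP ->| es] ht.
- case: s {IH h2} h1 nrs => [|b s] /= h1 nrs; first by exists [::].
  by rewrite in_cons -h1 ht eqxx in nrs.
- have [s' ->] := IH h2 nrs es ht. by exists (a :: s').
Qed.

Lemma chain_cat s1 s2 r : chain (s1 ++ s2) r -> chain s2 r.
Proof. by elim: s1 => [|a s1 IH] //= [_ /IH]. Qed.

Lemma chain_path e0 s r e : chain (e0 :: s) r -> hsrc e = r ->
  path (fun a b => htgt a == hsrc b) e0 (rcons s e).
Proof.
elim: s e0 => [|b s IH] e0 /= [h1 h2] he; first by rewrite h1 he eqxx.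
by rewrite h1 eqxx /=; apply: IH.
Qed.

Lemma cycle_from_stack r st e : chain st r -> hsrc e = r -> htgt e \in map (@hsrc G) st ->
  has_dir_cycle G.
Proof.
move=> hc hs /mapP [e0 he0 heq]; move: hc; case/splitPr: he0 => p1 p2 hc.
have hc2 := chain_cat hc.
exists e0, (rcons p2 e); rewrite last_rcons (chain_path hc2 hs) /=.
by apply/eqP.
Qed.

Lemma rank_nocycle (f : V -> nat) : (forall e : E, f (htgt e) < f (hsrc e)) -> ~ has_dir_cycle G.
Proof.
move=> hf [e0 [es /andP [hp /eqP hl]]].
suff: f (htgt (last e0 es)) < f (hsrc e0) by rewrite hl ltnn.
elim: es e0 hp {hl} => [|b es IH] e0 /=; first by move=> _; exact: hf.
case/andP => /eqP h1 h2; apply: ltn_trans (IH b h2) _; rewrite -h1; exact: hf.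
Qed.

Record Base (mv : V -> nmark) (me : E -> emark) : Prop := {
  b_loop : forall e, hsrc e = htgt e -> me e = EUnmarked;
  b_egreen : forall e, me e <> EGreen;
  b_ngreen : forall v, mv v <> NGreen;
  b_nunm : forall v, mv v <> NUnmarked;
  b_blue : forall e, me e = EBlue -> mv (htgt e) = NBlue;
  b_rank : exists f : V -> nat, forall e, mv (hsrc e) = NBlue ->
             mv (htgt e) = NBlue /\ f (htgt e) < f (hsrc e) }.

Lemma base_node mv me v y : Base mv me -> mv v <> NBlue -> y <> NGreen -> y <> NUnmarked ->
  y <> NBlue -> Base (upd mv v y) me.
Proof.
case=> h1 h2 h3 h4 h5 [f hf] hv y1 y2 y3; split => //.
- by move=> w; rewrite updE; case: eqP.
- by move=> w; rewrite updE; case: eqP.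
- move=> e /h5; rewrite updE; case: eqP => // -> //.
- exists f => e; rewrite !updE; case: eqP => // _ /hf [ht hlt].
  by case: eqP => [ev|//]; rewrite ev in ht.
Qed.

Lemma base_edge mv me e y : Base mv me -> hsrc e <> htgt e -> y <> EGreen ->
  (y = EBlue -> mv (htgt e) = NBlue) -> Base mv (upd me e y).
Proof.
case=> h1 h2 h3 h4 h5 hr hne y1 y2; split => //.
- by move=> e' he'; rewrite updE; case: eqP => [ee|_]; [rewrite ee in he'|exact: h1].
- by move=> e'; rewrite updE; case: eqP.
- by move=> e'; rewrite updE; case: eqP => [->|_] //; exact: h5.
Qed.

Definition Explored (r : V) (mv : V -> nmark) :=
  forall e : E, hsrc e = r -> htgt e <> r /\ mv (htgt e) = NBlue.

Lemma base_finish mv me r : Base mv me -> mv r = NRed -> Explored r mv ->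
  Base (upd mv r NBlue) me.
Proof.
case=> h1 h2 h3 h4 h5 [f hf] hr hx; split => //.
- by move=> w; rewrite updE; case: eqP.
- by move=> w; rewrite updE; case: eqP.
- by move=> e /h5; rewrite updE; case: eqP.
- exists (upd f r (\sum_(v : V) f v).+1) => e; rewrite !updE.
  case: (hsrc e =P r) => [hs _|hs].
  + have [ht hb] := hx e hs; rewrite (introF eqP ht) hb; split => //.
    rewrite ltnS (bigD1 (htgt e)) //=; exact: leq_addr.
  + move/hf => [hb hlt]; have ht : htgt e <> r by move=> ht; rewrite ht hr in hb.
    by rewrite (introF eqP ht).
Qed.

Definition FlagC (mv : V -> nmark) (rt : V -> bool) :=
  (exists v, rt v /\ mv v = NGreen) /\ has_dir_cycle G.

Definition St (P : (V -> nmark) -> (E -> emark) -> (V -> bool) -> Prop) (X : hgraph) :=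
  exists mv me rt, X = @remark G mv me rt /\ P mv me rt.

Lemma flag_rule r mv me rt Y : rule_app r (@remark G mv me rt) Y -> FlagC mv rt ->
  St (fun mv me rt => FlagC mv rt) Y.
Proof.
move=> h [[v [hrv hgv]] hc].
have nv : forall x, mv x <> NGreen -> (v == x) = false.
  by move=> x hx; apply/eqP => ex; rewrite ex in hgv.
case: r h => /=.
- case=> x [hx ->]; do 3 eexists; split; first reflexivity.
  split => //; exists v; rewrite !updE nv ?hx //.
- case=> x [_ [hx ->]]; do 3 eexists; split; first reflexivity.
  split => //; exists v; rewrite !updE nv ?hx //.
- case=> x [hrx [hx ->]]; do 3 eexists; split; first reflexivity.
  split => //; exists x; rewrite !updE eqxx //.
- case=> x [_ [_ ->]]; do 3 eexists; split; first reflexivity.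
  split => //; exists v => //.
- case=> v1 [v2 [e [_ [_ [_ [_ [_ [_ ->]]]]]]]]; do 3 eexists; split; first reflexivity.
  split => //; exists v => //.
- case=> v1 [v2 [e [_ [_ [_ [_ [_ [_ [_ ->]]]]]]]]]; do 3 eexists; split; first reflexivity.
  split => //; exists v => //.
- case=> v1 [v2 [e [_ [_ [h1 [h2 [_ [_ [_ ->]]]]]]]]]; do 3 eexists; split; first reflexivity.
  split => //; exists v; rewrite !updE !nv ?h1 ?h2 //.
- case=> v1 [v2 [e [_ [h1 [_ [h2 [_ [_ [_ ->]]]]]]]]]; do 3 eexists; split; first reflexivity.
  split => //; exists v; rewrite !updE !nv ?h1 ?h2 //.
- case=> x [e [hrx [hx [_ [_ [_ ->]]]]]]; do 3 eexists; split; first reflexivity.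
  split => //; exists x; rewrite !updE eqxx //.
Qed.

Lemma flag_exec P X o : exec P X o -> St (fun mv me rt => FlagC mv rt) X ->
  match o with Res Y | Brk Y => St (fun mv me rt => FlagC mv rt) Y | Failed => True end.
Proof.
induction 1; simpl; intro hx; try exact I.
all: try (destruct hx as [mv [me [rt [eq hf]]]]; subst; eapply flag_rule; eauto; fail).
all: eauto. all: try (destruct o; eauto).
Qed.


Lemma St_impl (P Q : (V -> nmark) -> (E -> emark) -> (V -> bool) -> Prop) X :
  (forall mv me rt, P mv me rt -> Q mv me rt) -> St P X -> St Q X.
Proof. by move=> h [mv [me [rt [-> hp]]]]; do 3 eexists; split; [reflexivity|apply: h]. Qed.

Record DfsP (r : V) (st : seq E) mv me (rt : V -> bool) : Prop := {
  d_base : Base mv me;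
  d_root : forall v, rt v = (v == r);
  d_red : forall v, mv v = NRed <-> v \in r :: map (@hsrc G) st;
  d_dash : forall e, me e = EDashed <-> e \in st;
  d_chain : chain st r;
  d_uniq : uniq (r :: map (@hsrc G) st);
  d_nored : forall e, me e <> ERed }.

Lemma explored r st mv me rt : DfsP r st mv me rt ->
  (forall Y, ~ rule_app r_next_edge (@remark G mv me rt) Y) ->
  (forall Y, ~ rule_app r_loop (@remark G mv me rt) Y) -> Explored r mv.
Proof.
move=> D hn hl e hs.
have hrr : rt r by rewrite (d_root D) eqxx.
have hmr : mv r = NRed by apply/(d_red D); rewrite in_cons eqxx.
have ht : htgt e <> r.
  move=> ht; apply: (hl (@remark G (upd mv r NGreen) me rt)); exists r, e => /=.
  do 5 (split => //); by apply: (b_loop (d_base D)); rewrite hs ht.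
split => //.
case hE: (me e).
- exfalso; apply: (hn (@remark G mv (upd me e ERed) rt)); exists r, (htgt e), e => /=.
  split; first by apply/eqP => /esym.
  by do 5 (split => //).
- by case: (d_nored D hE).
- by case: (b_egreen (d_base D) hE).
- exact: b_blue (d_base D) _ hE.
- exfalso; move/(d_dash D): hE => /(map_f (@hsrc G)); rewrite hs => hin.
  by have := d_uniq D; rewrite /= hin.
Qed.


Definition InvD mv me rt := (exists r st, @DfsP r st mv me rt) \/ FlagC mv rt.
Definition QD mv me (rt : V -> bool) :=
  (exists r, @DfsP r [::] mv me rt /\ Explored r mv) \/ FlagC mv rt.

Lemma dfs_step r st mv me rt o : DfsP r st mv me rt -> exec DFS (@remark G mv me rt) o ->
  match o with Res Y => St InvD Y | Brk Y => St QD Y | Failed => False end.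
Proof.
move=> D h.
have hrr : rt r by rewrite (d_root D) eqxx.
have hmr : mv r = NRed by apply/(d_red D); rewrite in_cons eqxx.
have B := d_base D.
case/inv_try: h => [[Y [hn hA]] | [[hn hB] | [Y [hn _]]]]; last by case: (rs_nobrk hn).
-
  case/inv_R1: hn => [[Y' [[eY] happ]]|[//]]; subst Y'.
  move: happ => /= [v1 [v2 [e [hne [hr1 [hm1 [hs [ht [hme eY]]]]]]]]]; subst Y.
  have v1r : v1 = r by apply/eqP; rewrite -(d_root D).
  rewrite v1r in hne hs; clear hr1 hm1.
  have he_st : e \notin st by apply/negP => /(d_dash D); rewrite hme.
  have onlyred : forall e', upd me e ERed e' = ERed -> e' = e.
    by move=> e'; rewrite updE; case: eqP => // _ h; case: (d_nored D h).
  have hsne : hsrc e <> htgt e by rewrite hs ht; apply/eqP.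
  case/inv_try: hA => [[Z [hmi hS]] | [[hmi hF] | [Z [hmi _]]]]; last by case: (rs_nobrk hmi).
  + move/inv_skip: hS => ->.
    case/inv_RS2: hmi => [[Z' [[eZ] [hm|hi]]]|[//]]; subst Z'.
    * move: hm => /= [w1 [w2 [e' [hne' [hr1' [hm1' [hm2' [hs' [ht' [hme' eZ]]]]]]]]]]; subst Z.
      have w1r : w1 = r by apply/eqP; rewrite -(d_root D).
      rewrite w1r in hne' hs' *; clear hr1' hm1'.
      have ee := onlyred _ hme'. subst e'.
      have w2v : w2 = v2 by rewrite -ht' ht.
      rewrite w2v in hne' hm2' ht' *.
      do 3 eexists; split; first reflexivity.
      left; exists v2, (rcons st e); split.
      -- have B1 : Base mv (upd me e ERed) by apply: base_edge.
         have B2 : Base mv (upd (upd me e ERed) e EDashed) by apply: base_edge.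
         have B3 : Base (upd mv r NRed) (upd (upd me e ERed) e EDashed)
           by apply: base_node => //; rewrite hmr.
         by apply: base_node => //; rewrite updE eq_sym (negbTE hne) hm2'.
      -- move=> x; rewrite !updE (d_root D); case: (x == v2) => //; by case: (x == r).
      -- move=> x; have := d_red D x; rewrite !updE map_rcons hs !in_cons mem_rcons !in_cons.
         case: (x == v2) => //=; case: (x == r) => //=.
      -- by move=> x; rewrite !updE mem_rcons in_cons; case: (x == e) => //=; exact: d_dash D x.
      -- by rewrite -ht; apply: chain_rcons (d_chain D) hs.
      -- have nv2 : v2 \notin r :: map (@hsrc G) st by apply/negP => /(d_red D); rewrite hm2'.
         by rewrite map_rcons hs /= mem_rcons nv2 rcons_uniq; exact: d_uniq D.
      -- by move=> x; rewrite !updE; case: (x == e) => // h; case: (d_nored D h).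
    * move: hi => /= [w1 [w2 [e' [hne' [hr1' [hm1' [hm2' [hs' [ht' [hme' eZ]]]]]]]]]]; subst Z.
      have w1r : w1 = r by apply/eqP; rewrite -(d_root D).
      rewrite w1r in hne' hs' *; clear hr1' hm1'.
      have ee := onlyred _ hme'. subst e'.
      have w2v : w2 = v2 by rewrite -ht' ht.
      rewrite w2v in hne' hm2' ht' *.
      do 3 eexists; split; first reflexivity.
      left; exists r, st; split.
      -- have B1 : Base mv (upd me e ERed) by apply: base_edge.
         by apply: base_edge => // _; rewrite ht.
      -- exact: d_root D.
      -- exact: d_red D.
      -- move=> x; rewrite !updE; case: (x =P e) => [->|_]; last exact: d_dash D x.
         by split => // hin; rewrite hin in he_st.
      -- exact: d_chain D.
      -- exact: d_uniq D.
      -- by move=> x; rewrite !updE; case: (x == e) => // h; case: (d_nored D h).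
  + case/inv_RS2: hmi => [[? [//]]|[_ [hnm hni]]].
    case/inv_seq: hF => [[Z [hsf hbr]]|[[hsf _]|[Z [hsf _]]]]; last by case: (rs_nobrk hsf).
    * move/inv_break: hbr => ->.
      case/inv_R1: hsf => [[Z' [[eZ] hsf]]|[//]]; subst Z'.
      move: hsf => /= [w [hw [hmw eZ]]]; subst Z.
      do 3 eexists; split; first reflexivity.
      right; split; first by exists w; rewrite updE eqxx.
      have hv2 : mv v2 = NRed.
        case hv: (mv v2).
        - by case: (b_nunm B hv).
        - done.
        - by case: (b_ngreen B hv).
        - exfalso; eapply hni; exists r, v2, e => /=; rewrite updE eqxx.
          split; first done. by do 7 (split => //).
        - exfalso; eapply hnm; exists r, v2, e => /=; rewrite updE eqxx.
          split; first done. by do 7 (split => //).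
      have : v2 \in r :: map (@hsrc G) st by apply/(d_red D).
      rewrite in_cons => /orP [/eqP ev|hin]; first by rewrite ev eqxx in hne.
      by apply: (cycle_from_stack (d_chain D) hs); rewrite ht.
    * case/inv_R1: hsf => [[? [//]]|[_ hsf]].
      by case: (hsf (@remark G (upd mv r NGreen) (upd me e ERed) rt)); exists r.
-
  case/inv_R1: hn => [[? [//]]|[_ hn]].
  case/inv_seq: hB => [[Z [h1 h2]]|[[h1 _]|[Z [h1 _]]]].
  + case/inv_try: h1 => [[W [hl hsk]]|[[hl hsk]|[W [hl _]]]]; last by case: (rs_nobrk hl).
    * move/inv_skip: hsk => [eZ]; subst W.
      case/inv_R1: hl => [[W' [[eW] hl]]|[//]]; subst W'.
      move: hl => /= [x [e [hrx [hmx [hs [ht [hme eW]]]]]]]; subst Z.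
      have F : St (fun mv me rt => FlagC mv rt) (@remark G (upd mv x NGreen) me rt).
        do 3 eexists; split; first reflexivity.
        split; first by exists x; rewrite updE eqxx.
        by exists e, [::]; rewrite /= hs ht eqxx.
      have := flag_exec h2 F; case: o h2 => [Y| |Y] h2 /= hY.
      -- by apply: St_impl hY => ? ? ? ?; right.
      -- by case: (tsb_nofail h2).
      -- by apply: St_impl hY => ? ? ? ?; right.
    * move/inv_skip: hsk => [eZ]; subst Z.
      case/inv_R1: hl => [[? [//]]|[_ hl]].
      have Hx := explored D hn hl.
      case/inv_try: h2 => [[W [hb hsk2]]|[[hb hbr]|[W [hb _]]]]; last by case: (rs_nobrk hb).
      -- move/inv_skip: hsk2 => ->.
         case/inv_R1: hb => [[W' [[eW] hb]]|[//]]; subst W'.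
         move: hb => /= [v1 [v2 [e [hne [hm1 [hr2 [hm2 [hs [ht [hme eW]]]]]]]]]]; subst W.
         have v2r : v2 = r by apply/eqP; rewrite -(d_root D).
         rewrite v2r in hne ht hm2 *; clear hr2.
         have nr : r \notin map (@hsrc G) st by have := d_uniq D => /andP [].
         have [st' est] := chain_last (d_chain D) nr (proj1 (d_dash D e) hme) ht.
         have hc := d_chain D; have hu := d_uniq D; have hred := d_red D; have hd := d_dash D.
         rewrite est in hc hu hred hd.
         have [hc' _] := chain_rcons_inv hc.
         have nr1 : r \notin v1 :: map (@hsrc G) st'
           by move: hu; rewrite map_rcons hs /= mem_rcons => /andP [].
         have hu1 : uniq (v1 :: map (@hsrc G) st')
           by move: hu; rewrite map_rcons hs /= rcons_uniq => /andP [].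
         have ne : e \notin st'.
           apply/negP => /(map_f (@hsrc G)); rewrite hs => hin.
           by move: hu1; rewrite /= hin.
         do 3 eexists; split; first reflexivity.
         left; exists v1, st'; split.
         ++ apply: base_edge; first exact: base_finish.
            ** by rewrite hs ht; apply/eqP.
            ** done.
            ** by rewrite ht updE eqxx.
         ++ move=> x; rewrite !updE (d_root D); case: (x =P r) => [->|_].
            ** by rewrite eq_sym (negbTE hne).
            ** by case: (x == v1).
         ++ move=> x; rewrite updE; case: (x =P r) => [->|nx].
            ** by rewrite (negbTE nr1); split.
            ** rewrite hred map_rcons hs !in_cons mem_rcons in_cons (introF eqP nx) /=; done.
         ++ move=> x; rewrite updE; case: (x =P e) => [->|nx].
            ** by rewrite (negbTE ne); split.
            ** by rewrite hd mem_rcons in_cons (introF eqP nx).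
         ++ by rewrite -hs.
         ++ exact: hu1.
         ++ by move=> x; rewrite updE; case: (x == e) => // h; case: (d_nored D h).
      -- move/inv_break: hbr => ->.
         case/inv_R1: hb => [[? [//]]|[_ hb]].
         have st0 : st = [::].
           case Est: st => [//|a s]; exfalso.
           have hc := d_chain D; have hu := d_uniq D; have hd := d_dash D; have hred := d_red D.
           rewrite Est lastI in hc hu hd hred.
           move: (belast a s) (last a s) hc hu hd hred => s' e hc hu hd hred.
           have [_ ht] := chain_rcons_inv hc.
           apply: (hb (@remark G (upd mv r NBlue) (upd me e EBlue)
                               (upd (upd rt (hsrc e) true) r false))).
           exists (hsrc e), r, e => /=.
           split.
             apply/eqP => he; move: hu; rewrite /= map_rcons mem_rcons he in_cons eqxx //.
           split; first by apply/hred; rewrite map_rcons !in_cons mem_rcons !in_cons eqxx !orbT.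
           do 4 (split => //).
           split; first by apply/hd; rewrite mem_rcons in_cons eqxx.
           done.
         subst st.
         do 3 eexists; split; first reflexivity.
         by left; exists r.
  + by case/inv_try: h1 => [[? [_ /inv_skip]]|[[_ /inv_skip]|[? [/rs_nobrk]]]].
  + by case/inv_try: h1 => [[? [_ /inv_skip]]|[[_ /inv_skip]|[? [/rs_nobrk]]]].
Qed.

Lemma dfs_inv X o : exec DFS X o -> St InvD X ->
  match o with Res Y => St InvD Y | Brk Y => St QD Y | Failed => St QD X end.
Proof.
move=> h [mv [me [rt [eX [[r [st D]]|F]]]]]; subst X.
- by have := dfs_step D h; case: o {h}.
- have hF : St (fun mv me rt => FlagC mv rt) (@remark G mv me rt)
    by do 3 eexists; split; [reflexivity|exact: F].
  have := flag_exec h hF; case: o {h} => [Y| |Y] /= hY.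
  + by apply: St_impl hY => ? ? ? ?; right.
  + by apply: St_impl hF => ? ? ? ?; right.
  + by apply: St_impl hY => ? ? ? ?; right.
Qed.

Lemma dfs_loop X o : exec (CLoop DFS) X o -> St InvD X -> exists Y, o = Res Y /\ St QD Y.
Proof. exact: (@loop_inv DFS (St InvD) (St QD) dfs_inv). Qed.

Record OutP mv me (rt : V -> bool) : Prop := {
  o_base : Base mv me;
  o_root : forall v, rt v = false;
  o_red : forall v, mv v <> NRed;
  o_ered : forall e, me e <> ERed;
  o_edash : forall e, me e <> EDashed }.

Definition InvO mv me rt := OutP mv me rt \/ FlagC mv rt.
Definition QO mv me rt := (OutP mv me rt /\ forall v, mv v <> NGrey) \/ FlagC mv rt.

Definition body := CSeq (R1 r_init) (CSeq (CLoop DFS) (CTry (R1 r_unroot) Skip Break)).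

Lemma out_step mv me rt o : OutP mv me rt -> exec body (@remark G mv me rt) o ->
  match o with Res Y => St InvO Y | Brk Y => St QO Y | Failed => QO mv me rt end.
Proof.
move=> O h; have B := o_base O.
case/inv_seq: h => [[Z [hi hr]]|[[hi ->]|[Z [hi _]]]]; last by case: (rs_nobrk hi).
- case/inv_R1: hi => [[Z' [[eZ] hi]]|[//]]; subst Z'.
  move: hi => /= [v [hv eZ]]; subst Z.
  have D : DfsP v [::] (upd mv v NRed) me (upd rt v true).
    split.
    + by apply: base_node => //; rewrite hv.
    + by move=> x; rewrite updE (o_root O); case: (x == v).
    + move=> x; rewrite updE inE; case: (x =P v) => //= _.
      by split => // h; case: (o_red O h).
    + by move=> x; split => // h; case: (o_edash O h).
    + done.
    + done.
    + exact: o_ered O.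
  have hD : St InvD (@remark G (upd mv v NRed) me (upd rt v true))
    by do 3 eexists; split; [reflexivity|left; exists v, [::]].
  case/inv_seq: hr => [[W [hl ht]]|[[hl _]|[W [hl _]]]].
  + have [W' [[eW] QW]] := dfs_loop hl hD; subst W'.
    case: QW => [mv2 [me2 [rt2 [eW [[r [D2 Hx]]|F]]]]]; subst W.
    * have hmr : mv2 r = NRed by apply/(d_red D2); rewrite in_cons eqxx.
      have hrr : rt2 r by rewrite (d_root D2) eqxx.
      case/inv_try: ht => [[U [hu hs]]|[[hu _]|[U [hu _]]]]; last by case: (rs_nobrk hu).
      -- move/inv_skip: hs => ->.
         case/inv_R1: hu => [[U' [[eU] hu]]|[//]]; subst U'.
         move: hu => /= [w [hrw [hmw eU]]]; subst U.
         have wr : w = r by apply/eqP; rewrite -(d_root D2).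
         rewrite wr; clear hrw hmw.
         do 3 eexists; split; first reflexivity.
         left; split.
         ++ exact: base_finish (d_base D2) hmr Hx.
         ++ by move=> x; rewrite updE (d_root D2); case: eqP.
         ++ move=> x; rewrite updE; case: (x =P r) => // nx /(d_red D2).
            by rewrite inE => /eqP.
         ++ by move=> e h; case: (d_nored D2 h).
         ++ by move=> e /(d_dash D2).
      -- case/inv_R1: hu => [[? [//]]|[_ hu]].
         by case: (hu (@remark G (upd mv2 r NBlue) me2 (upd rt2 r false))); exists r.
    * have hF : St (fun mv me rt => FlagC mv rt) (@remark G mv2 me2 rt2)
        by do 3 eexists; split; [reflexivity|exact: F].
      have := flag_exec ht hF; case: o ht => [Y| |Y] ht /= hY.
      -- by apply: St_impl hY => ? ? ? ?; right.
      -- by case: (tsb_nofail ht).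
      -- by apply: St_impl hY => ? ? ? ?; right.
  + by have [? []] := dfs_loop hl hD.
  + by have [? []] := dfs_loop hl hD.
- case/inv_R1: hi => [[? [//]]|[_ hi]].
  left; split => // v hv.
  by apply: (hi (@remark G (upd mv v NRed) me (upd rt v true))); exists v.
Qed.

Lemma out_inv X o : exec body X o -> St InvO X ->
  match o with Res Y => St InvO Y | Brk Y => St QO Y | Failed => St QO X end.
Proof.
move=> h [mv [me [rt [eX [O|F]]]]]; subst X.
- have := out_step O h; case: o {h} => //= hq.
  by do 3 eexists; split; [reflexivity|exact: hq].
- have hF : St (fun mv me rt => FlagC mv rt) (@remark G mv me rt)
    by do 3 eexists; split; [reflexivity|exact: F].
  have := flag_exec h hF; case: o {h} => [Y| |Y] /= hY.
  + by apply: St_impl hY => ? ? ? ?; right.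
  + by apply: St_impl hF => ? ? ? ?; right.
  + by apply: St_impl hY => ? ? ? ?; right.
Qed.

Lemma result o : initial_graph G -> exec is_dag G o ->
  (exists Y, o = Res Y /\ iso_upto_marks G Y /\ ~ has_dir_cycle G) \/
  (o = Failed /\ has_dir_cycle G).
Proof.
move=> [hv he] h.
have O : OutP (@hmarkV G) (@hmarkE G) (@hroot G).
  split.
  - split.
    + by move=> e _; exact: he.
    + by move=> e; rewrite he.
    + by move=> v; rewrite (hv v).1.
    + by move=> v; rewrite (hv v).1.
    + by move=> e; rewrite he.
    + by exists (fun _ => 0) => e; rewrite (hv _).1.
  - by move=> v; rewrite (hv v).2.
  - by move=> v; rewrite (hv v).1.
  - by move=> e; rewrite he.
  - by move=> e; rewrite he.
have hI : St InvO G by exists (@hmarkV G), (@hmarkE G), (@hroot G); split; [exact: remark_eta|left].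
case/inv_seq: h => [[Y [hl hc]]|[[hl _]|[Y [hl _]]]]; last first.
- by have [? []] := @loop_inv body (St InvO) (St QO) out_inv _ _ hl hI.
- by have [? []] := @loop_inv body (St InvO) (St QO) out_inv _ _ hl hI.
have [Y' [[eY] QY]] := @loop_inv body (St InvO) (St QO) out_inv _ _ hl hI; subst Y'.
case: QY => [mv [me [rt [eY [[O2 ng]|F]]]]]; subst Y.
- have B := o_base O2.
  have allb : forall v, mv v = NBlue.
    move=> v; case hv': (mv v).
    + by case: (b_nunm B hv').
    + by case: (o_red O2 hv').
    + by case: (b_ngreen B hv').
    + done.
    + by case: (ng _ hv').
  have [f hf] := b_rank B.
  have nocyc : ~ has_dir_cycle G.
    by apply: (@rank_nocycle f) => e; have [] := hf e (allb _).
  case/inv_if: hc => [[Z [hfl _]]|[[_ hs]|[Z [hfl _]]]]; last by case: (rs_nobrk hfl).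
  + case/inv_R1: hfl => [[? [_ /= [v [_ [hgv _]]]]]|[//]].
    by case: (b_ngreen B hgv).
  + left; exists (@remark G mv me rt); split; first exact: inv_skip hs.
    split => //.
    exists id, id; split; first by exists id.
    split; first by exists id.
    done.
- right; split; last exact: F.2.
  case/inv_if: hc => [[Z [_ hcf]]|[[hfl _]|[Z [hfl _]]]]; last by case: (rs_nobrk hfl).
  + exact: inv_cfail hcf.
  + case/inv_R1: hfl => [[? [//]]|[_ hn]].
    case: F => [[v [hrv hgv]] _].
    by case: (hn (@remark G mv me rt)); exists v.
Qed.

End Inv.


Theorem mainTheorem4 (G : hgraph) :
  initial_graph G ->
  ~ diverges is_dag G /\
  (acyclic G ->
     (exists H, exec is_dag G (Res H)) /\
     (forall o, exec is_dag G o -> exists H, o = Res H /\ iso_upto_marks G H)) /\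
  (has_dir_cycle G ->
     exec is_dag G Failed /\ (forall o, exec is_dag G o -> o = Failed)).
Proof.
move=> hi; split; first exact: term.
have R := fun o => @result G o hi.
split.
- move=> hac; split.
  + case: (total is_dag G) => [[o ho]|hd]; last by case: (term hd).
    case: (R o ho) => [[Y [eo _]]|[_ hc]]; [by exists Y; rewrite -eo | by case: hac].
  + move=> o ho; case: (R o ho) => [[Y [-> [hiso _]]]|[_ hc]]; [by exists Y | by case: hac].
- move=> hc; split.
  + case: (total is_dag G) => [[o ho]|hd]; last by case: (term hd).
    case: (R o ho) => [[Y [_ [_ nc]]]|[eo _]]; [by case: nc | by rewrite -eo].
  + move=> o ho; case: (R o ho) => [[Y [_ [_ nc]]]|[eo _]]; [by case: nc | done].
Qed.
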